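(* Fix an online scheduler $\texttt{ALG}$ for the serial-parallel scheduling problem on $p$ processors that is oblivious to the parallel works of tasks, and fix a constant $c>0$. There exists a task arrival process $\mathcal{T}$ on which the expected competitive ratio of $\texttt{ALG}$ with $c$ speed augmentation for mean response time is $\Omega(p^{1/4})$; that is, $\mathbb{E}\big[\mathrm{TRT}^{\mathcal{T}}_{\texttt{ALG}}\big]\ge \Omega(p^{1/4})\cdot \mathrm{TRT}^{c\cdot\mathcal{T}}_{\texttt{OPT}}$, where the constant in $\Omega$ depends only on $c$.
   Context: Serial-parallel scheduling problem: $p$ identical processors. A task arrival process is a finite set of tasks $\tau_i=(\sigma_i,\pi_i,t_i)$, $i=1,\dots,n$, with arrival time $t_i\ge0$, serial work $\sigma_i$ and parallel work $\pi_i$, $1\le\pi_i/\sigma_i\le p$. A task is performed either by its serial job (work $\sigma_i$, at most one processor at any instant) or by its parallel job (work $\pi_i$, any number of processors, rate equal to number of processors); time is continuous, allocations may be fractional, preemption is allowed, and the implementation choice is irrevocable once started. Total response time $\mathrm{TRT}=\sum_i(f_i-t_i)$ with $f_i$ the completion time; mean response time is $\mathrm{TRT}/n$. $\mathrm{TRT}_{\texttt{OPT}}^{\mathcal{T}}$ is the optimal offline total response time. For $c>0$, $c\cdot\mathcal{T}$ is $\mathcal{T}$ with all works multiplied by $c$; comparing $\mathrm{TRT}_{\texttt{ALG}}^{\mathcal{T}}$ with $\mathrm{TRT}_{\texttt{OPT}}^{c\cdot\mathcal{T}}$ means $\texttt{ALG}$ has $c$ speed augmentation. $\texttt{ALG}$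 may be randomized (the expectation is over its randomness). Being oblivious to parallel works means $\texttt{ALG}$ learns each task's arrival time and serial work but not $\pi_i$. *)

(* Defs.v *)
From HB Require Import structures.
From mathcomp Require Import all_boot all_order all_algebra.
From mathcomp Require Import all_classical all_reals all_analysis.
Set Implicit Arguments. Unset Strict Implicit. Unset Printing Implicit Defensive.
Import Order.TTheory GRing.Theory Num.Theory.
Local Open Scope ring_scope.
Local Open Scope classical_set_scope.

Record task (R : realType) := Task { sig : R; par : R; arr : R }.

Section Sched.
Variable R : realType.

Definition work (tau : task R) (b : bool) : R := if b then par tau else sig tau.

Definition valid_instance (p : nat) (T : seq (task R)) : Prop :=
  sorted (fun a b : task R => arr a <= arr b) T /\
  all (fun tau : task R =>
     [&& 0 <= arr tau, 0 < sig tau & 1 <= par tau / sig tau <= p%:R]) T.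

Definition scale (c : R) (T : seq (task R)) : seq (task R) :=
  map (fun tau => Task (c * sig tau) (c * par tau) (arr tau)) T.

(* A schedule of the i-th task (i : nat, position in the sequence):
   - sched_par i : the implementation chosen (true = parallel job), irrevocable;
   - sched_W i s : cumulative work processed on task i up to time s
     (continuous time, fractional allocations, preemption allowed: the
     instantaneous rate of task i is the derivative of sched_W i);
   - sched_fin i : completion time of task i. *)
Record schedule := Schedule {
  sched_par : nat -> bool;
  sched_W : nat -> R -> R;
  sched_fin : nat -> R }.

Definition tsk (T : seq (task R)) (i : nat) : task R := nth (Task 0 0 0) T i.

(* Validity of a schedule of T on p identical processors:
   no work before arrival, nonnegative rates, a serial job uses at most one
   processor at any instant, at most p processors in use in total at any
   instant, and sched_fin i is the first time the chosen job's work is done. *)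
Definition valid_schedule (p : nat) (T : seq (task R)) (S : schedule) : Prop :=
  (forall i, (i < size T)%N ->
     (forall s, s <= arr (tsk T i) -> sched_W S i s = 0) /\
     (forall s u, s <= u -> sched_W S i s <= sched_W S i u) /\
     (~~ sched_par S i -> forall s u, s <= u ->
         sched_W S i u - sched_W S i s <= u - s) /\
     work (tsk T i) (sched_par S i) <= sched_W S i (sched_fin S i) /\
     (forall s, s < sched_fin S i ->
         sched_W S i s < work (tsk T i) (sched_par S i))) /\
  (forall s u, s <= u ->
     \sum_(i < size T) (sched_W S i u - sched_W S i s) <= p%:R * (u - s)).

Definition TRT (T : seq (task R)) (S : schedule) : R :=
  \sum_(i < size T) (sched_fin S i - arr (tsk T i)).

Definition TRT_OPT (p : nat) (T : seq (task R)) : R :=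
  inf [set TRT T S | S in [set S | valid_schedule p T S]].

(* Tasks that have arrived strictly before time s (a prefix, since instances
   are sorted by arrival), as seen by an algorithm oblivious to parallel works:
   arrival times and serial works only. *)
Definition seen_before (s : R) (T : seq (task R)) : seq (R * R) :=
  map (fun tau => (arr tau, sig tau)) [seq tau <- T | (arr tau < s)%R].

(* T' is indistinguishable from T before time s when running schedule S
   (computed on T): same arrivals/serial works before s, and the completion
   events of S observed before s are the same whether the parallel works are
   those of T or of T'. *)
Definition indist_before (s : R) (T T' : seq (task R)) (S : schedule) : Prop :=
  seen_before s T = seen_before s T' /\
  (forall i, (i < size [seq tau <- T | (arr tau < s)%R])%N ->
     forall u, u < s ->
       (work (tsk T i) (sched_par S i) <= sched_W S i u) =
       (work (tsk T' i) (sched_par S i) <= sched_W S i u)).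

(* A (randomized) online scheduler on p processors, oblivious to parallel
   works: for each random seed w, ALG w maps every instance to a valid
   schedule, and its decisions before time s only depend on the information
   revealed before s (arrivals, serial works, completions). *)
Definition oblivious_online_scheduler (Omega : Type) (p : nat)
    (ALG : Omega -> seq (task R) -> schedule) : Prop :=
  (forall w T, valid_instance p T -> valid_schedule p T (ALG w T)) /\
  (forall w T T' s, valid_instance p T -> valid_instance p T' ->
     indist_before s T T' (ALG w T) ->
     forall i, (i < size [seq tau <- T | (arr tau < s)%R])%N ->
       (forall u, u < s -> sched_W (ALG w T') i u = sched_W (ALG w T) i u) /\
       ((exists u, u < s /\ 0 < sched_W (ALG w T) i u) ->
          sched_par (ALG w T') i = sched_par (ALG w T) i)).

End Sched.

(* Main.v *)
Require Import Defs.
From HB Require Import structures.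
From mathcomp Require Import all_boot all_order all_algebra.
From mathcomp Require Import all_classical all_reals all_analysis.
From Stdlib Require Import Lia.
From mathcomp Require Import zify ring lra.
Set Implicit Arguments. Unset Strict Implicit. Unset Printing Implicit Defensive.
Import Order.TTheory GRing.Theory Num.Theory.
Local Open Scope ring_scope.
Local Open Scope classical_set_scope.
Definition mk (R : realType) (p : nat) (b : bool) : task R :=
  Task 1 (if b then p%:R else 1) 0.

Definition TT (R : realType) (p n : nat) (x : {ffun 'I_n -> bool}) : seq (task R) :=
  [seq mk R p (x j) | j <- enum 'I_n].

Lemma size_TT (R : realType) p n (x : {ffun 'I_n -> bool}) : size (TT R p x) = n.
Proof. by rewrite /TT size_map size_enum_ord. Qed.

Lemma tsk_TT (R : realType) p n (x : {ffun 'I_n -> bool}) (i : 'I_n) :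
  tsk (TT R p x) i = mk R p (x i).
Proof.
by rewrite /tsk /TT (nth_map i) ?size_enum_ord // nth_ord_enum.
Qed.

Lemma fin_ge_arr (R : realType) p T (S : schedule R) i :
  valid_schedule p T S -> (i < size T)%N ->
  0 < work (tsk T i) (sched_par S i) ->
  arr (tsk T i) <= sched_fin S i.
Proof.
move=> [H _] Hi Hw; have [H0 [_ [_ [Hf _]]]] := H i Hi.
rewrite leNgt; apply/negP => Hlt.
have := H0 _ (ltW Hlt); move=> E; move: Hf; rewrite E => Hf.
by move: (lt_le_trans Hw Hf); rewrite ltxx.
Qed.
Lemma TRT_lb (R : realType) (p n : nat) (x : {ffun 'I_n -> bool}) (S : schedule R) (t : R) :
  (0 < p)%N -> valid_schedule p (TT R p x) S -> 0 <= t ->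
  \sum_(i < n) ((~~ sched_par S i)%:R + t * (sched_par S i && x i)%:R) - t ^+ 2
    <= TRT (TT R p x) S.
Proof.
move=> p0 Hv t0; have Hv' := Hv; case: Hv' => Hi Hcap.
have P0 : (0 : R) < p%:R by rewrite ltr0n.
have hi : forall i : 'I_n, (i < size (TT R p x))%N by move=> i; rewrite size_TT.
have work0 : forall i : 'I_n, 0 < work (tsk (TT R p x) i) (sched_par S i).
  move=> i; rewrite tsk_TT /work /mk /=; case: (sched_par S i) => //=; case: (x i) => //.
have fin0 : forall i : 'I_n, 0 <= sched_fin S i.
  move=> i; have := fin_ge_arr Hv (hi i) (work0 i); by rewrite tsk_TT.
have W00 : forall i : 'I_n, sched_W S i 0 = 0.
  move=> i; have [H0 _] := Hi i (hi i); apply: H0; by rewrite tsk_TT.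
have stepA : \sum_(i < n) (sched_par S i && x i && (sched_fin S i < t))%:R <= t.
  have cap := Hcap 0 t t0; rewrite size_TT subr0 in cap.
  rewrite -(ler_pM2l P0) mulr_sumr; apply: le_trans cap; apply: ler_sum => i _.
  have [H0 [Hm [_ [Hf _]]]] := Hi i (hi i).
  rewrite W00 subr0.
  case E : (sched_par S i && x i && (sched_fin S i < t)); last first.
    by rewrite mulr0 -(W00 i); apply: Hm.
  move/andP: E => [/andP [Ea Ex] Eft].
  rewrite mulr1; apply: le_trans (Hm _ _ (ltW Eft)); move: Hf.
  by rewrite tsk_TT /work /mk /= Ea Ex.
have stepB : forall i : 'I_n,
   (~~ sched_par S i)%:R + t * (sched_par S i && x i && (t <= sched_fin S i))%:R
     <= sched_fin S i.
  move=> i; have [H0 [Hm [Hser [Hf _]]]] := Hi i (hi i).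
  case Ea : (sched_par S i) => /=.
    rewrite add0r; case: (x i && (t <= sched_fin S i)) /andP => [[_ H]|_].
      by rewrite mulr1.
    by rewrite mulr0 fin0.
  rewrite mulr0 addr0; have := Hser; rewrite Ea => /(_ isT 0 (sched_fin S i) (fin0 i)).
  rewrite W00 !subr0; apply: le_trans; move: Hf; by rewrite tsk_TT /work /mk /= Ea.
rewrite /TRT size_TT.
have -> : \sum_(i < n) (sched_fin S i - arr (tsk (TT R p x) i)) = \sum_(i < n) sched_fin S i.
  by apply: eq_bigr => i _; rewrite tsk_TT /= subr0.
have split : forall i : 'I_n, (sched_par S i && x i)%:R =
   (sched_par S i && x i && (t <= sched_fin S i))%:R + (sched_par S i && x i && (sched_fin S i < t))%:R :> R.
  move=> i; case: (sched_par S i && x i) => //=; case: (leP t (sched_fin S i)) => //= _; by rewrite ?add0r ?addr0.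
apply: (@le_trans _ _ (\sum_(i < n) ((~~ sched_par S i)%:R + t * (sched_par S i && x i && (t <= sched_fin S i))%:R))); last first.
  by apply: ler_sum => i _; apply: stepB.
under eq_bigr => i _ do rewrite split mulrDr addrA.
rewrite big_split /= -mulr_sumr lerBlDr lerD2l expr2; apply: ler_wpM2l => //.
Qed.
Definition flip (n : nat) (i : 'I_n) (x : {ffun 'I_n -> bool}) : {ffun 'I_n -> bool} :=
  [ffun j => if j == i then ~~ x j else x j].

Lemma flipK n (i : 'I_n) : involutive (flip i).
Proof.
move=> x; apply/ffunP => j; rewrite !ffunE; case: eqP => // _; by rewrite negbK.
Qed.

Lemma valid_TT (R : realType) p n (x : {ffun 'I_n -> bool}) :
  (1 <= p)%N -> valid_instance p (TT R p x).
Proof.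
move=> p1; split.
  rewrite /TT; move: (enum 'I_n) => l; elim: l => [|a [|b l] IH] //=.
  by rewrite lexx /=; move: IH => /=.
rewrite /TT all_map; apply/allP => j _ /=; rewrite lexx ltr01 divr1 /=.
have P1 : (1 : R) <= p%:R by rewrite ler1n.
by case: (x j); rewrite ?lexx ?P1.
Qed.

Lemma filter_TT (R : realType) p n (x : {ffun 'I_n -> bool}) (s : R) :
  0 < s -> [seq tau <- TT R p x | arr tau < s] = TT R p x.
Proof. move=> s0; apply/all_filterP; rewrite /TT all_map; apply/allP => j _ //. Qed.

Lemma seen_TT (R : realType) p n (x y : {ffun 'I_n -> bool}) (s : R) :
  seen_before s (TT R p x) = seen_before s (TT R p y).
Proof.
rewrite /seen_before /TT !filter_map -!map_comp.
by congr (map _ _).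
Qed.

Lemma single_cap (R : realType) p T (S : schedule R) (i : nat) s u :
  valid_schedule p T S -> (i < size T)%N -> s <= u ->
  sched_W S i u - sched_W S i s <= p%:R * (u - s).
Proof.
move=> [Hi Hcap] hi su; apply: le_trans (Hcap _ _ su).
rewrite (bigD1 (Ordinal hi)) //= lerDl; apply: sumr_ge0 => j _.
have [_ [Hm _]] := Hi j (ltn_ord j); by rewrite subr_ge0 Hm.
Qed.

Lemma first_pos (R : realType) (f : nat -> R) N :
  f 0%N <= 0 -> 0 < f N -> exists k, f k <= 0 /\ 0 < f k.+1.
Proof.
move=> h0; elim: N => [|N IH]; first by rewrite ltNge h0.
move=> hN; case: (leP (f N) 0) => hf; first by exists N.
exact: IH.
Qed.
Lemma work_ge1 (R : realType) p n (y : {ffun 'I_n -> bool}) (j : 'I_n) a :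
  (1 <= p)%N -> 1 <= work (tsk (TT R p y) j) a.
Proof.
move=> p1; rewrite tsk_TT /work /mk; case: a; case: (y j) => //=; by rewrite ler1n.
Qed.

Lemma flip_par (R : realType) (p n : nat) (Omega : Type)
  (ALG : Omega -> seq (task R) -> schedule R) w (x : {ffun 'I_n -> bool}) (i : 'I_n) :
  (1 <= p)%N -> oblivious_online_scheduler p ALG ->
  sched_par (ALG w (TT R p (flip i x))) i = sched_par (ALG w (TT R p x)) i.
Proof.
move=> p1 [Hval Hobl].
set T := TT R p x; set T' := TT R p (flip i x); set S := ALG w T.
have vT : valid_instance p T := valid_TT R x p1.
have vT' : valid_instance p T' := valid_TT R (flip i x) p1.
have vS := Hval w T vT.
have hi : (i < size T)%N by rewrite size_TT.
have P0 : (0:R) < p%:R by rewrite ltr0n.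
set d : R := (4 * p%:R)^-1.
have d0 : 0 < d by rewrite invr_gt0 mulr_gt0.
have [Hi _] := vS; have [H0 [Hm [_ [Hf _]]]] := Hi i hi.
have W00 : sched_W S i 0 = 0 by apply: H0; rewrite /T tsk_TT.
have wpos : 0 < work (tsk T i) (sched_par S i).
  by apply: lt_le_trans (work_ge1 R x i _ p1).
have [N HN] : exists N : nat, 0 < sched_W S i (N%:R * d).
  have fin0 : 0 <= sched_fin S i.
    by have := fin_ge_arr vS hi wpos; rewrite /T tsk_TT.
  exists (Num.Def.archi_bound (sched_fin S i / d)).
  have := archi_boundP (divr_ge0 fin0 (ltW d0)).
  rewrite ltr_pdivrMr // => hlt.
  apply: lt_le_trans (Hm _ _ (ltW hlt)).
  exact: lt_le_trans Hf.
have h00 : sched_W S i (0%N%:R * d) <= 0 by rewrite mul0r W00.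
have [k [hk1 hk2]] := @first_pos R (fun k : nat => sched_W S i (k%:R * d)) N h00 HN.
set s0 := k%:R * d; set s := (k.+2)%:R * d.
have s_pos : 0 < s by rewrite mulr_gt0 // ltr0Sn.
have Wlt : forall u, u < s -> sched_W S i u < 1.
  move=> u hu; case: (leP u s0) => hus.
    by apply: le_lt_trans (Hm _ _ hus) _; apply: le_lt_trans hk1 _; exact: ltr01.
  have := single_cap vS hi (ltW hus).
  have e : p%:R * (s - s0) = 2^-1.
    rewrite /s /s0 -mulrBl -addn2 natrD addrAC subrr add0r /d.
    by field; rewrite pnatr_eq0 -lt0n.
  have : p%:R * (u - s0) < 2^-1.
    by rewrite -e ltr_pM2l // ltrBlDr subrK.
  move: hk1; rewrite -/s0 => hk1 h1 h2.
  have : sched_W S i u < 2^-1 by lra.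
  move=> h; apply: lt_trans h _; rewrite invf_lt1 //; lra.
have indist : indist_before s T T' S.
  split; first exact: seen_TT.
  move=> j hj u hu; rewrite filter_TT // size_TT in hj.
  case: (eqVneq j i) => [-> | hne].
    rewrite !leNgt (lt_le_trans (Wlt u hu) (work_ge1 R x i _ p1)).
    by rewrite (lt_le_trans (Wlt u hu) (work_ge1 R (flip i x) i _ p1)).
  rewrite /T /T' (tsk_TT R p x (Ordinal hj)) (tsk_TT R p (flip i x) (Ordinal hj)) ffunE.
  have -> : (Ordinal hj == i) = false by apply/negbTE.
  by [].
have hi' : (i < size [seq tau <- T | (arr tau < s)%R])%N by rewrite filter_TT // size_TT.
have [_ Hp] := Hobl w T T' s vT vT' indist i hi'.
apply: Hp; exists ((k.+1)%:R * d); split => //.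
by rewrite /s ltr_pM2r // ltr_nat.
Qed.
Definition wt (R : realType) n (q : R) (x : {ffun 'I_n -> bool}) : R :=
  \prod_(j < n) (if x j then q else 1 - q).

Lemma sum_wt (R : realType) n (q : R) : \sum_(x : {ffun 'I_n -> bool}) wt q x = 1.
Proof.
rewrite /wt -(bigA_distr_bigA (fun (j : 'I_n) (b : bool) => if b then q else 1 - q)).
by rewrite big1 // => j _; rewrite big_bool /= subrKC.
Qed.

Lemma wt_ge0 (R : realType) n (q : R) x : 0 <= q <= 1 -> 0 <= wt (n := n) q x.
Proof.
move=> /andP [q0 q1]; apply: prodr_ge0 => j _; case: (x j) => //; by rewrite subr_ge0.
Qed.

Lemma flip_i n (i : 'I_n) x : flip i x i = ~~ x i.
Proof. by rewrite ffunE eqxx. Qed.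

Lemma pairing (R : realType) n (q : R) (i : 'I_n) (g : {ffun 'I_n -> bool} -> R) :
  (forall x, g (flip i x) = g x) ->
  \sum_x wt q x * (g x * (x i)%:R) = q * \sum_x wt q x * g x.
Proof.
move=> hg.
pose w' (x : {ffun 'I_n -> bool}) := \prod_(j < n | j != i) (if x j then q else 1 - q).
have hw : forall x, wt q x = (if x i then q else 1 - q) * w' x.
  by move=> x; rewrite /wt (bigD1 i).
have hw' : forall x, w' (flip i x) = w' x.
  move=> x; apply: eq_bigr => j hj; rewrite ffunE; by rewrite (negbTE hj).
pose h x := w' x * g x.
have hh : forall x, h (flip i x) = h x by move=> x; rewrite /h hw' hg.
rewrite (bigID (fun x : {ffun 'I_n -> bool} => x i)) /=.
rewrite [X in _ = q * X](bigID (fun x : {ffun 'I_n -> bool} => x i)) /=.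
rewrite [X in _ + X = _]big1 ?addr0; last first.
  by move=> x /negbTE ->; rewrite /= ?mulr0n !mulr0.
have e : \sum_(x : {ffun 'I_n -> bool} | ~~ x i) wt q x * g x = \sum_(x : {ffun 'I_n -> bool} | x i) (1 - q) * h x.
  rewrite (reindex_inj (can_inj (flipK i))) /=.
  apply: eq_big => x; first by rewrite flip_i negbK.
  move=> xi; rewrite flip_i negbK in xi; rewrite hw flip_i xi /= -mulrA -hh.
  by [].
rewrite e -big_split /= mulr_sumr; apply: eq_bigr => x xi.
rewrite hw xi /= mulr1 /h; ring.
Qed.
Lemma clamp_facts (R : realType) (f s u : R) : 0 < f -> s <= u ->
  [/\ (s <= 0 -> Order.min (Order.max s 0) f = 0),
      0 <= Order.min (Order.max u 0) f - Order.min (Order.max s 0) f <= u - s,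
      Order.min (Order.max f 0) f = f &
      (s < f -> Order.min (Order.max s 0) f < f)].
Proof.
move=> f0 su; rewrite !maxEle !minEle.
case: (leP s 0) => hs; case: (leP u 0) => hu; rewrite ?lexx;
  try (case: (leP f 0) => hf); try lra;
  repeat (case: ifP => /=; rewrite ?lexx => ?); try lra; split; try lra;
  apply/andP; split; lra.
Qed.
Lemma tsk_scale (R : realType) (c : R) T i : (i < size T)%N ->
  tsk (scale c T) i = Task (c * sig (tsk T i)) (c * par (tsk T i)) (arr (tsk T i)).
Proof. by move=> hi; rewrite /tsk /scale (nth_map (Task 0 0 0)). Qed.

Lemma size_scale (R : realType) (c : R) T : size (scale c T) = size T.
Proof. by rewrite size_map. Qed.

Definition xb n (x : {ffun 'I_n -> bool}) (j : nat) : bool :=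
  [exists k : 'I_n, (val k == j) && x k].

Lemma xbE n (x : {ffun 'I_n -> bool}) (i : 'I_n) : xb x i = x i.
Proof.
apply/existsP/idP => [[k /andP [/eqP /val_inj -> //]] | xi].
by exists i; rewrite eqxx xi.
Qed.

Definition rate (R : realType) p n (x : {ffun 'I_n -> bool}) (j : nat) : R :=
  if xb x j then 1 else p%:R / n%:R.

Definition Sopt (R : realType) p n (x : {ffun 'I_n -> bool}) (c : R) : schedule R :=
  Schedule (fun j => ~~ xb x j)
    (fun j s => rate R p x j * Order.min (Order.max s 0) (c / rate R p x j))
    (fun j => c / rate R p x j).

Lemma opt_bound (R : realType) (p n : nat) (x : {ffun 'I_n -> bool}) (c : R) :
  (0 < n)%N -> (n <= p)%N -> 0 < c ->
  TRT_OPT p (scale c (TT R p x)) <= \sum_(i < n) (if x i then c else c * n%:R / p%:R).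
Proof.
move=> n0 np c0.
have N0 : (0 : R) < n%:R by rewrite ltr0n.
have P0 : (0 : R) < p%:R by rewrite ltr0n; exact: leq_trans np.
have r1 : (1 : R) <= p%:R / n%:R by rewrite ler_pdivlMr // mul1r ler_nat.
have rpos : forall j, 0 < rate R p x j.
  by move=> j; rewrite /rate; case: (xb x j) => //; apply: lt_le_trans r1.
have rle : forall j, rate R p x j <= p%:R / n%:R.
  by move=> j; rewrite /rate; case: (xb x j).
have fpos : forall j, 0 < c / rate R p x j by move=> j; rewrite divr_gt0.
have workc : forall j, (j < n)%N ->
    work (tsk (scale c (TT R p x)) j) (~~ xb x j) = c.
  move=> j hj; rewrite tsk_scale ?size_TT //.
  rewrite (tsk_TT R p x (Ordinal hj)) /work /mk /=.
  have -> : xb x j = x (Ordinal hj) by rewrite -xbE.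
  by case: (x (Ordinal hj)) => /=; rewrite mulr1.
have valid : valid_schedule p (scale c (TT R p x)) (Sopt p x c).
  split.
    move=> j; rewrite size_scale size_TT => hj /=.
    have arr0 : arr (tsk (scale c (TT R p x)) j) = 0.
      by rewrite tsk_scale ?size_TT // (tsk_TT R p x (Ordinal hj)).
    rewrite arr0 workc //.
    have [f0 _ f1 f2] := clamp_facts (u := 0) (fpos j) (lexx 0).
    split.
      move=> s hs; have [h _ _ _] := clamp_facts (u := 0) (fpos j) hs.
      by rewrite h // mulr0.
    split.
      move=> s u su; have [_ /andP [h _] _ _] := clamp_facts (fpos j) su.
      by rewrite -subr_ge0 -mulrBr mulr_ge0 // ltW.
    split.
      move=> hxb s u su; have [_ /andP [_ h] _ _] := clamp_facts (fpos j) su.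
      move: hxb; rewrite negbK => hxb.
      have e : rate R p x j = 1 by rewrite /rate hxb.
      by rewrite /= e !mul1r; rewrite e in h.
    split.
      by rewrite f1 mulrC divfK // gt_eqF.
    move=> s hs; have [_ _ _ h] := clamp_facts (u := s) (fpos j) (lexx s).
    by have := h hs; rewrite -(ltr_pM2l (rpos j)) mulrCA divff ?gt_eqF // mulr1.
  move=> s u su /=.
  apply: (@le_trans _ _ (\sum_(i < size (scale c (TT R p x))) (p%:R / n%:R * (u - s)))).
    apply: ler_sum => i _; rewrite -mulrBr.
    have [_ /andP [h1 h2] _ _] := clamp_facts (fpos i) su.
    apply: (@le_trans _ _ (rate R p x i * (u - s))); first by rewrite ler_pM2l.
    by apply: ler_wpM2r; rewrite ?subr_ge0 ?rle.
  rewrite sumr_const card_ord size_scale size_TT -mulr_natr.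
  rewrite le_eqVlt; apply/orP; left; apply/eqP; field; by rewrite gt_eqF.
have lb : has_lbound [set TRT (scale c (TT R p x)) S | S in [set S | valid_schedule p (scale c (TT R p x)) S]].
  exists 0 => y [S vS <-]; rewrite /TRT; apply: sumr_ge0 => i _; rewrite subr_ge0.
  apply: (fin_ge_arr vS (ltn_ord i)).
  have hi : (i < size (TT R p x))%N by case: i => /= k; rewrite size_scale.
  have hin : (i < n)%N by move: hi; rewrite size_TT.
  rewrite tsk_scale // /work /=.
  have := work_ge1 R x (Ordinal hin) (sched_par S i) (leq_trans n0 np).
  rewrite /work /=; case: (sched_par S i) => h; rewrite mulr_gt0 //; exact: lt_le_trans h.
apply: le_trans (ge_inf lb (ex_intro2 _ _ (Sopt p x c) valid erefl)) _.
rewrite /TRT size_scale size_TT le_eqVlt; apply/orP; left; apply/eqP; apply: eq_bigr => i _.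
rewrite tsk_scale ?size_TT // tsk_TT /= subr0 /rate xbE.
case: (x i); first by rewrite divr1.
by rewrite invf_div mulrA.
Qed.
Lemma TRT_ge0 (R : realType) (p n : nat) (x : {ffun 'I_n -> bool}) (S : schedule R) :
  (1 <= p)%N -> valid_schedule p (TT R p x) S -> 0 <= TRT (TT R p x) S.
Proof.
move=> p1 vS; rewrite /TRT; apply: sumr_ge0 => i _; rewrite subr_ge0.
apply: (fin_ge_arr vS (ltn_ord i)).
have hin : (i < n)%N by case: i => /= k; rewrite size_TT.
have := work_ge1 R x (Ordinal hin) (sched_par S i) p1.
by apply: lt_le_trans.
Qed.

Lemma pointwise (R : realType) (p n : nat) (Omega : Type)
  (ALG : Omega -> seq (task R) -> schedule R) w (q t : R) :
  (1 <= p)%N -> oblivious_online_scheduler p ALG -> 0 <= q <= 1 -> t * q = 1 -> 0 <= t ->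
  n%:R - t ^+ 2 <= \sum_(x : {ffun 'I_n -> bool}) wt q x * TRT (TT R p x) (ALG w (TT R p x)).
Proof.
move=> p1 Hobl q01 tq t0.
pose a (i : 'I_n) (x : {ffun 'I_n -> bool}) := sched_par (ALG w (TT R p x)) i.
have E2 : forall b1 b2 : bool, ((b1 && b2)%:R : R) = b1%:R * b2%:R.
  by case; case; rewrite ?mul1r ?mul0r.
have key : forall i : 'I_n,
   \sum_x wt q x * ((~~ a i x)%:R + t * (a i x && x i)%:R) = 1.
  move=> i.
  under eq_bigr => x _ do rewrite E2 mulrDr (mulrCA _ t).
  rewrite big_split /= -mulr_sumr.
  rewrite (pairing q (g := fun x => (a i x)%:R)); last first.
    by move=> x; rewrite /a flip_par.
  rewrite mulrA tq mul1r -big_split /= -[RHS](sum_wt n q); apply: eq_bigr => x _.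
  by rewrite -mulrDr; case: (a i x); rewrite /= ?addr0 ?add0r mulr1.
have Hv : forall x : {ffun 'I_n -> bool}, valid_schedule p (TT R p x) (ALG w (TT R p x)).
  by move=> x; case: Hobl => Hval _; apply: Hval; apply: valid_TT.
apply: (@le_trans _ _ (\sum_(x : {ffun 'I_n -> bool}) wt q x *
     (\sum_(i < n) ((~~ a i x)%:R + t * (a i x && x i)%:R) - t ^+ 2))).
  rewrite le_eqVlt; apply/orP; left; apply/eqP.
  under eq_bigr => x _ do rewrite mulrBr mulr_sumr.
  rewrite sumrB exchange_big /= -mulr_suml sum_wt mul1r.
  by under eq_bigr => i _ do rewrite key; rewrite sumr_const card_ord.
apply: ler_sum => x _; apply: ler_wpM2l; first exact: wt_ge0.
apply: TRT_lb => //.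
Qed.
Lemma numeric (R : realType) (c M Pp y : R) :
  0 < c -> 1 <= M -> 0 < Pp -> M ^+ 4 <= Pp -> 0 <= y -> y < M + 1 ->
  (24 * c)^-1 * y * ((2 * M * M) * (c * M^-1 + c * (2 * M * M) / Pp))
    < 2 * M * M - M ^+ 2.
Proof.
move=> c0 M1 P0 MP y0 yM.
have M0 : 0 < M by lra.
set z := M ^+ 4 / Pp.
have z0 : 0 <= z by rewrite /z divr_ge0 // ?exprn_ge0 ?ltW.
have z1 : z <= 1 by rewrite /z ler_pdivrMr // mul1r.
have -> : (24 * c)^-1 * y * ((2 * M * M) * (c * M^-1 + c * (2 * M * M) / Pp))
   = y * (2 * M + 4 * z) / 24.
  rewrite /z; field; rewrite ?gt_eqF //.
rewrite expr2.
have h1 : y * (2 * M + 4 * z) <= y * (6 * M) by apply: ler_wpM2l => //; lra.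
have h2 : y * (6 * M) < (M + 1) * (6 * M) by rewrite ltr_pM2r //; lra.
nra.
Qed.

Lemma upper_sum (R : realType) n (q c e : R) :
  \sum_(x : {ffun 'I_n -> bool}) wt q x * (\sum_(i < n) (c * (x i)%:R + e))
    = n%:R * (c * q + e).
Proof.
under eq_bigr => x _ do rewrite mulr_sumr.
rewrite exchange_big /=.
have h : forall i : 'I_n,
    \sum_(x : {ffun 'I_n -> bool}) wt q x * (c * (x i)%:R + e) = c * q + e.
  move=> i.
  under eq_bigr => x _ do rewrite mulrDr (mulrCA _ c) -[(x i)%:R]mul1r.
  rewrite big_split /= -mulr_sumr -mulr_suml sum_wt mul1r.
  rewrite (pairing q (g := fun _ => 1)) //.
  under eq_bigr => x _ do rewrite mulr1.
  by rewrite sum_wt mulr1.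
under eq_bigr => i _ do rewrite h.
by rewrite sumr_const card_ord mulr_natl.
Qed.
Unset Implicit Arguments.
Set Strict Implicit.
Theorem proposition9p1 (R : realType) (c : R) (hc : 0 < c) :
  exists K : R, 0 < K /\ exists p0 : nat, forall p : nat, (p0 <= p)%N ->
  forall (d : measure_display) (Omega : measurableType d)
         (P : probability Omega R) (ALG : Omega -> seq (task R) -> schedule R),
    oblivious_online_scheduler p ALG ->
    (forall T, valid_instance p T ->
       measurable_fun setT (fun w => TRT T (ALG w T))) ->
    exists T : seq (task R), valid_instance p T /\ (0 < size T)%N /\
      ((K * (p%:R `^ (4^-1)) * TRT_OPT p (scale c T))%:E
        <= \int[P]_w (TRT T (ALG w T))%:E)%E.
Proof.
exists (24 * c)^-1; split; first by rewrite invr_gt0 mulr_gt0.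
exists 4%N => p p4 d Omega P ALG Hobl Hmeas.
pose s := PeanoNat.Nat.sqrt p.
pose m := PeanoNat.Nat.sqrt s.
pose n := (2 * m * m)%N.
have [hs1 hs2] := PeanoNat.Nat.sqrt_spec p (PeanoNat.Nat.le_0_l p).
have [hm1 hm2] := PeanoNat.Nat.sqrt_spec s (PeanoNat.Nat.le_0_l s).
rewrite -/s in hs1 hs2; rewrite -/m in hm1 hm2.
have s2 : (2 <= s)%N.
  have := PeanoNat.Nat.sqrt_le_mono 4 p (elimT ssrnat.leP p4).
  by move/ssrnat.leP.
have m1 : (1 <= m)%N by nia.
have np : (n <= p)%N by rewrite /n; nia.
have n0 : (0 < n)%N by rewrite /n; nia.
have p1 : (1 <= p)%N by lia.
have pm4 : (p < m.+1 ^ 4)%N by rewrite !expnS expn0; nia.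
pose M : R := m%:R.
have M1 : 1 <= M by rewrite ler1n.
have M0 : 0 < M by lra.
pose q : R := M^-1.
pose t : R := M.
have tq : t * q = 1 by rewrite /t /q divff // gt_eqF.
have q01 : 0 <= q <= 1 by rewrite /q invr_ge0 invf_le1 // (ltW M0).
pose y : R := p%:R `^ 4^-1.
have y0 : 0 <= y by apply: powR_ge0.
have P0 : (0 : R) < p%:R by rewrite ltr0n.
have yM : y < M + 1.
  rewrite ltNge; apply/negP => h.
  have h4 : (M + 1) ^+ 4 <= y ^+ 4 by apply: lerXn2r => //; rewrite nnegrE; lra.
  have e : y ^+ 4 = p%:R.
    by rewrite /y -powR_mulrn ?powR_ge0 // -powRrM mulVf ?powRr1 //.
  have : (p%:R : R) < (m.+1)%:R ^+ 4 by rewrite -natrX ltr_nat.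
  rewrite -addn1 natrD -/M; lra.
pose F (x : {ffun 'I_n -> bool}) (w : Omega) := TRT (TT R p x) (ALG w (TT R p x)).
have mF : forall x, measurable_fun setT (F x).
  by move=> x; apply: Hmeas; apply: valid_TT.
have F0 : forall x w, 0 <= F x w.
  move=> x w; apply: TRT_ge0 => //; case: Hobl => Hval _; apply: Hval; exact: valid_TT.
apply: contrapT => Hno.
have lt_x : forall x : {ffun 'I_n -> bool},
   (\int[P]_w (F x w)%:E < ((24 * c)^-1 * y * TRT_OPT p (scale c (TT R p x)))%:E)%E.
  move=> x; rewrite ltNge; apply/negP => hle; apply: Hno; exists (TT R p x); split.
    exact: valid_TT.
  by split; [rewrite size_TT | exact: hle].
have e1 : (\sum_(x : {ffun 'I_n -> bool}) (wt q x)%:E * \int[P]_w (F x w)%:E =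
          \int[P]_w (\sum_(x : {ffun 'I_n -> bool}) (wt q x)%:E * (F x w)%:E))%E.
  rewrite ge0_integral_sum //.
  - apply: eq_bigr => x _; rewrite ge0_integralZl_EFin //.
    + by move=> w _; rewrite lee_fin.
    + exact/measurable_realfun.measurable_EFinP.
    + exact: wt_ge0.
  - by move=> x; apply: measurable_funeM; apply/measurable_realfun.measurable_EFinP.
  - by move=> x w _; rewrite mule_ge0 // lee_fin ?wt_ge0.
have low : ((n%:R - t ^+ 2)%:E <=
     \sum_(x : {ffun 'I_n -> bool}) (wt q x)%:E * \int[P]_w (F x w)%:E)%E.
  rewrite e1.
  have := integral_cst P (@measurableT _ Omega) ((n%:R - t ^+ 2)%:E).
  move=> h.
  have e2 : ((n%:R - t ^+ 2)%:E * P [set: Omega])%E = (n%:R - t ^+ 2)%:E.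
    by rewrite -[RHS]mule1; congr (_ * _)%E; exact: probability_setT.
  rewrite -e2 -h.
  apply: ge0_le_integral => //.
  - move=> w _ /=; rewrite lee_fin /t /n natrM natrM -/M; nra.
  - apply: emeasurable_sum => x; apply: measurable_funeM; exact/measurable_realfun.measurable_EFinP.
  - move=> w _ /=.
    under eq_bigr => x _ do rewrite -EFinM.
    rewrite sumEFin lee_fin; exact: pointwise.
have up : (\sum_(x : {ffun 'I_n -> bool}) (wt q x)%:E * \int[P]_w (F x w)%:E <=
    (\sum_(x : {ffun 'I_n -> bool}) wt q x * ((24 * c)^-1 * y * TRT_OPT p (scale c (TT R p x))))%:E)%E.
  rewrite -sumEFin; apply: lee_sum => x _; rewrite EFinM; apply: lee_wpmul2l.
    by rewrite lee_fin wt_ge0.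
  exact: ltW (lt_x x).
have up2 : \sum_(x : {ffun 'I_n -> bool}) wt q x * ((24 * c)^-1 * y * TRT_OPT p (scale c (TT R p x)))
    <= (24 * c)^-1 * y * (n%:R * (c * q + c * n%:R / p%:R)).
  rewrite -upper_sum mulr_sumr; apply: ler_sum => x _; rewrite mulrCA.
  apply: ler_wpM2l; first by rewrite mulr_ge0 // invr_ge0 mulr_ge0 // ltW.
  apply: ler_wpM2l; first exact: wt_ge0.
  apply: le_trans (@opt_bound R p n x c n0 np hc) _; apply: ler_sum => i _.
  have e0 : 0 <= c * n%:R / p%:R by rewrite divr_ge0 ?mulr_ge0 // ltW.
  case: (x i) => /=; lra.
have := le_trans low (le_trans up (lee_tofin up2)); rewrite lee_fin.
have := numeric hc M1 P0 _ y0 yM.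
have M4 : M ^+ 4 <= p%:R.
  rewrite /M -natrX ler_nat !expnS expn0; nia.
move=> /(_ M4).
rewrite /n /t /q natrM natrM -/M => h1 h2.
move: (lt_le_trans h1 h2); by rewrite ltxx.
Qed.
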